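(* For each $\eta\in(0,\pi/3)$ and each integer $n\ge0$, $\angle b_0z_0z_1=\angle z_nz_{n+1}z_{n+2}=\angle w_nw_{n+1}w_{n+2}=\pi-\eta$.
   Context: Let $a=\frac{e^{-i\eta}}{2\cos\eta}$, $c=\frac{1}{1-|a|^4}$, and for integers $j\ge0$ put $z_j=ca^{j+1}$, $w_j=1-c|a|^2a^j$, $b_0=a+c|a|^4$. For $u,v,w\in\mathbb{C}$, $\angle uvw=\arg\frac{w-v}{u-v}$ with $\arg$ taking values in $[0,2\pi)$. *)

(* Defs.v *)
From Stdlib Require Import Reals.
From Coquelicot Require Import Coquelicot.
Open Scope R_scope.

(* Principal argument with values in [0, 2*PI):
   for z = x + i y <> 0, arg z = acos (x/|z|) if y >= 0, else 2*PI - acos (x/|z|). *)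
Definition carg (z : C) : R :=
  if Rle_dec 0 (Im z) then acos (Re z / Cmod z)
  else 2 * PI - acos (Re z / Cmod z).

Definition cangle (u v w : C) : R := carg ((w - v) / (u - v))%C.

Definition cexpi (t : R) : C := (cos t, sin t).

Definition a_ (eta : R) : C := (cexpi (- eta) / RtoC (2 * cos eta))%C.
Definition c_ (eta : R) : R := 1 / (1 - (Cmod (a_ eta)) ^ 4).
Definition z_ (eta : R) (j : nat) : C := (RtoC (c_ eta) * Cpow (a_ eta) (S j))%C.
Definition w_ (eta : R) (j : nat) : C :=
  (1 - RtoC (c_ eta * (Cmod (a_ eta)) ^ 2) * Cpow (a_ eta) j)%C.
Definition b0_ (eta : R) : C := (a_ eta + RtoC (c_ eta * (Cmod (a_ eta)) ^ 4))%C.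

(* Main.v *)
Require Import Defs.
From Stdlib Require Import Reals Lra.
From Coquelicot Require Import Coquelicot.
Open Scope R_scope.

Lemma neq_fst (x y : C) : fst x <> fst y -> x <> y.
Proof. intros H E; apply H; rewrite E; reflexivity. Qed.

Lemma RtoC_neq0 (r : R) : r <> 0 -> RtoC r <> 0%C.
Proof. intros H; apply neq_fst; simpl; exact H. Qed.

Lemma ratio (u d q : C) : d <> 0%C -> u = (q * d)%C -> (u / d)%C = q.
Proof. intros Hd ->. field. exact Hd. Qed.

Lemma alg_b0 (a : C) (c m : R) : 1 - m^2 <> 0 -> c = 1/(1-m^2) ->
  (a + RtoC (c*m^2) - RtoC c * Cpow a 1 = RtoC (c*m^2)*(1-a))%C.
Proof. intros Hm ->. destruct a. apply injective_projections; simpl; field; simpl in Hm; lra. Qed.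

Lemma alg_num (a : C) (c m : R) : m <> 0 ->
  (RtoC c * Cpow a 2 - RtoC c * Cpow a 1 = RtoC (1/m^2) * - a * (RtoC (c*m^2)*(1-a)))%C.
Proof. intros Hm. destruct a. apply injective_projections; simpl; field; simpl in *; auto. Qed.

Section S.
Variable eta : R.
Hypothesis Heta : 0 < eta < PI / 3.

Lemma co_gt : 1/2 < cos eta.
Proof.
  rewrite <- cos_PI3. pose proof PI_RGT_0.
  apply cos_decreasing_1; lra.
Qed.

Lemma si_gt : 0 < sin eta.
Proof. pose proof PI_RGT_0. apply sin_gt_0; lra. Qed.

Lemma a_eq : a_ eta = (1/2, - sin eta / (2 * cos eta)).
Proof.
  pose proof co_gt.
  unfold a_, cexpi, Cdiv, Cmult, Cinv, RtoC; simpl.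
  rewrite cos_neg, sin_neg.
  apply injective_projections; simpl; field; lra.
Qed.

Lemma m_eq : Cmod (a_ eta) ^ 2 = 1 / (4 * (cos eta)^2).
Proof.
  pose proof co_gt. rewrite a_eq. unfold Cmod; simpl fst; simpl snd.
  rewrite pow2_sqrt.
  2:{ apply Rplus_le_le_0_compat; apply pow2_ge_0. }
  pose proof (sin2_cos2 eta). unfold Rsqr in H0.
  field_simplify; try lra.
  replace (sin eta ^ 2) with (1 - cos eta ^ 2) by (simpl; lra).
  field; lra.
Qed.

Lemma m_bounds : 0 < Cmod (a_ eta) ^ 2 < 1.
Proof.
  pose proof co_gt. rewrite m_eq. split.
  - apply Rdiv_lt_0_compat; nra.
  - apply (Rmult_lt_reg_r (4 * cos eta ^ 2)); [nra|].
    field_simplify; nra.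
Qed.

Lemma carg_key (t : R) : 0 < t -> carg (RtoC t * - a_ eta)%C = PI - eta.
Proof.
  intros Ht. pose proof co_gt. pose proof si_gt. pose proof PI_RGT_0.
  set (s := t / (2 * cos eta)).
  assert (Hs : 0 < s) by (unfold s; apply Rdiv_lt_0_compat; lra).
  assert (E : (RtoC t * - a_ eta)%C = (s * - cos eta, s * sin eta)).
  { rewrite a_eq. unfold RtoC, Cmult, Copp. simpl.
    apply injective_projections; simpl; unfold s; field; lra. }
  rewrite E. unfold carg. simpl Im. simpl Re.
  destruct (Rle_dec 0 (s * sin eta)) as [_|n]; [|exfalso; apply n; nra].
  assert (Hm : Cmod (s * - cos eta, s * sin eta) = s).
  { unfold Cmod; simpl fst; simpl snd.
    replace ((s * - cos eta) ^ 2 + (s * sin eta) ^ 2) with (s ^ 2).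
    - apply sqrt_pow2; lra.
    - pose proof (sin2_cos2 eta). unfold Rsqr in H2. simpl. nra. }
  rewrite Hm.
  replace (s * - cos eta / s) with (cos (PI - eta)).
  - apply acos_cos; lra.
  - rewrite cos_minus, cos_PI, sin_PI. field. lra.
Qed.

Lemma a_neq1 : a_ eta <> 1%C.
Proof. rewrite a_eq. apply neq_fst. simpl. lra. Qed.
Lemma a_neq0 : a_ eta <> 0%C.
Proof. rewrite a_eq. apply neq_fst. simpl. lra. Qed.
Lemma c_neq0 : c_ eta <> 0.
Proof.
  pose proof m_bounds. unfold c_.
  replace (Cmod (a_ eta) ^ 4) with ((Cmod (a_ eta) ^ 2) ^ 2) by ring.
  unfold Rdiv. apply Rmult_integral_contrapositive; split; [lra|]. apply Rinv_neq_0_compat. nra.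
Qed.

End S.

Theorem lemma6p1 (eta : R) (n : nat) :
  0 < eta < PI / 3 ->
  cangle (b0_ eta) (z_ eta 0) (z_ eta 1) = PI - eta /\
  cangle (z_ eta n) (z_ eta (S n)) (z_ eta (S (S n))) = PI - eta /\
  cangle (w_ eta n) (w_ eta (S n)) (w_ eta (S (S n))) = PI - eta.
Proof.
  intros H.
  pose proof (a_neq1 eta H) as H1. pose proof (a_neq0 eta H) as H0.
  pose proof (c_neq0 eta H) as Hc. pose proof (m_bounds eta H) as Hm.
  assert (H1' : (1 - a_ eta)%C <> 0%C).
  { intro E. apply H1. replace (a_ eta) with (1 - (1 - a_ eta))%C by ring.
    rewrite E. ring. }
  set (a := a_ eta) in *.
  set (m := Cmod a ^ 2) in *.
  assert (Cm4 : Cmod a ^ 4 = m ^ 2) by (unfold m; ring).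
  split; [|split].
  - unfold cangle, b0_, z_. fold a. rewrite Cm4.
    rewrite <- (carg_key eta H (1 / m ^ 2)).
    2:{ apply Rdiv_lt_0_compat; nra. }
    fold a. f_equal.
    assert (Hd : (a + RtoC (c_ eta * m ^ 2) - RtoC (c_ eta) * Cpow a 1)%C
        = (RtoC (c_ eta * m ^ 2) * (1 - a))%C).
    { apply alg_b0; [nra|]. unfold c_. fold a. rewrite Cm4. reflexivity. }
    apply ratio.
    + rewrite Hd. apply Cmult_neq_0; auto. apply RtoC_neq0. apply Rmult_integral_contrapositive; split; auto. nra.
    + rewrite Hd. apply alg_num. nra.
  - unfold cangle, z_. fold a.
    rewrite <- (carg_key eta H 1) by lra. f_equal. fold a. apply ratio.
    + rewrite !Cpow_S.
      replace (RtoC (c_ eta) * (a * Cpow a n) - RtoC (c_ eta) * (a * (a * Cpow a n)))%C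
        with (RtoC (c_ eta) * a * Cpow a n * (1 - a))%C by ring.
      apply Cmult_neq_0; auto. apply Cmult_neq_0; [apply Cmult_neq_0|]; auto.
      apply RtoC_neq0; auto. apply Cpow_nz; auto.
    + rewrite !Cpow_S. ring.
  - unfold cangle, w_. fold a. fold m.
    rewrite <- (carg_key eta H 1) by lra. f_equal. fold a. apply ratio.
    + rewrite !Cpow_S.
      replace (1 - RtoC (c_ eta * m) * Cpow a n - (1 - RtoC (c_ eta * m) * (a * Cpow a n)))%C
        with (RtoC (c_ eta * m) * Cpow a n * (- (1 - a)))%C by ring.
      apply Cmult_neq_0; [apply Cmult_neq_0|].
      * apply RtoC_neq0; auto. apply Rmult_integral_contrapositive; split; auto; lra.
      * apply Cpow_nz; auto.
      * intro E; apply H1'. replace (1 - a)%C with (- (- (1 - a)))%C by ring.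
        rewrite E; ring.
    + rewrite !Cpow_S. ring.
Qed.
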